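(* Let $H=(S_1,\dots,S_\ell)$ be a partial route. Then there exist $(\alpha,\beta)\in\mathcal{A}$ such that the projected scenario recourse inequality $$\sum_{v\in V_+:\,w_v>0}\phi_v(\alpha,\beta)\,\theta_v\ \ge\ \sum_{\xi\in[N]}\sum_{\emptyset\ne S\subseteq V_+}\alpha^\xi_S\,x(E(S))+\nu(\alpha,\beta)$$ dominates the inequality $\theta(V_+(H))\ge\mathcal{L}^*(H)\cdot W_{OF}(x;H)$, in the sense that for every $\bar x\in\mathcal{X}$, every $\theta\in\mathbb{R}^{V_+}_{\ge0}$ satisfying the projected inequality at $x=\bar x$ satisfies $\theta(V_+(H))\ge\mathcal{L}^*(H)\,W_{OF}(\bar x;H)$. In particular, $\theta(V_+(H))\ge\mathcal{L}^*(H)\,W_{OF}(x;H)$ is valid for $\mathcal{P}$.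
   Context: $G=(V,E)$ complete undirected graph, $V=\{0\}\cup V_+$ ($V_+$ customers); capacity $C>0$; scenarios $\xi\in[N]$ with demands $d^\xi\in\mathbb{Q}^{V_+}_{\ge0}$ ($d^\xi(v)\le C$) and probabilities $p_\xi\ge0$, $\sum_\xi p_\xi=1$. $f(S)=\sum_{i\in S}f(i)$; $k_\xi(S)=\lceil d^\xi(S)/C\rceil$; $\bar d=\sum_\xi p_\xi d^\xi$. $E(S)$: edges with both ends in $S$; $E(S,T)$: edges with one end in $S$ and one in $T$; $\delta(S)$: edges with exactly one end in $S$. $\mathcal{X}$ is one of $\mathcal{X}_{\mathrm{sub}}=\{x\in[0,2]^E: x(\delta(v))=2\ \forall v\in V_+,\ x(E(S))\le|S|-1\ \forall\emptyset\ne S\subseteq V_+\}$ or $\mathcal{X}_{\mathrm{cvrp}}=\mathcal{X}_{\mathrm{sub}}\cap\{x:x(\delta(0))=2k,\ x(E(S))\le|S|-\lceil\bar d(S)/C\rceil\}$. Fixed $w\in\mathbb{Q}^{V_+}_{\ge0}$, $b\in\mathbb{Z}^{V_+}_{\ge0}$ such that for every route $R$ the set $\Pi(R)\cap[\mathbf 0,b]^N$ is nonempty, where $\Pi(R)$ is the set of integer $y\ge0$ in $\mathbb{R}^{[N]\times V_+}$ such that for each $\xi$ and route $R=(v_1,\dots,v_\ell)$ (with $v_0=v_{\ell+1}=0$) there exist $f_{(v_{i-1},v_i)}\in[0,C]$ and $g_{v_i}\ge0$ with $f_{(v_{i-1},v_i)}+d^\xi(v_i)=f_{(v_i,v_{i+1})}+g_{v_i}$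 and $g_{v_i}\le Cy^\xi_{v_i}$; $[\mathbf 0,b]^N=\{y:0\le y^\xi_v\le b_v\}$. A partial route $H=(S_1,\dots,S_\ell)$ is a tuple of pairwise disjoint nonempty customer sets with no index $i$ such that both $S_i$ and $S_{i+1}$ are non-singletons; $V_+(H)=\bigcup_iS_i$; $H'\subseteq H$ means $H'=(S_i,\dots,S_j)$ with $1\le i\le j\le\ell$. $x(H)=\sum_{i\in[\ell]}x(E(S_i))+\sum_{i\in[\ell-1]}x(E(S_i,S_{i+1}))$ and $W_{OF}(x;H)=1+(x(H)-|V_+(H)|+1)+\sum_{i\in\{2,\ell-1\}\cap[\ell]}(x(E(S_i))-|S_i|+1)$. For each $\xi$, $\mathcal{L}^*_\xi(H)=\min\{\sum_{v\in V_+(H)}w_vy_v:\ y(V_+(H'))\ge k_\xi(V_+(H'))-1\ \forall H'\subseteq H,\ y_v\le b_v\ \forall v\in V_+,\ y\ge0\}$, and $\mathcal{L}^*(H)=\sum_\xi p_\xi\mathcal{L}^*_\xi(H)$. Multipliers $\alpha=(\alpha^\xi_S)_{\xi,\emptyset\ne S\subseteq V_+}$, $\beta=(\beta^\xi_v)$; $\nu(\alpha,\beta)=\sum_\xi\sum_S\alpha^\xi_S(k_\xi(S)-|S|)+\sum_\xi\sum_v\beta^\xi_vb_v$; for $w_v>0$, $\phi_v(\alpha,\beta)=\big(\max_{\xi}\frac{\beta^\xi_v+\sum_{S\ni v}\alpha^\xi_S}{p_\xi w_v}\big)^+$ (where $(a)^+=\max\{a,0\}$). $\mathcal{A}$: set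 of $(\alpha,\beta)$ with $\alpha\ge0$, $\beta\le0$, and $\beta^\xi_v+\sum_{S\ni v}\alpha^\xi_S\le0$ for all $\xi$ and all $v$ with $w_v=0$. $\mathcal{P}$ is the set of $(x,\theta)$ with $x\in\mathcal{X}$ such that there exists $y\in[\mathbf 0,b]^N$ with $y^\xi(S)\ge k_\xi(S)+x(E(S))-|S|$ for all $\emptyset\ne S\subseteq V_+$, $\xi$, and $\theta\ge0$, $\theta_v\ge\sum_\xi p_\xi w_vy^\xi_v$ for all $v$. *)

(* Defs.v *)
From HB Require Import structures.
From mathcomp Require Import all_boot all_order all_algebra.
From mathcomp Require Import reals.
Set Implicit Arguments. Unset Strict Implicit. Unset Printing Implicit Defensive.
Import Order.TTheory GRing.Theory Num.Theory.
Local Open Scope ring_scope.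

(* Vertices V = 'I_n.+1, depot = ord0, customer v : 'I_n is vertex (lift ord0 v).
   Edges of the complete undirected graph = pairs (a,b) of vertices with a < b;
   an edge vector is x : 'I_n.+1 -> 'I_n.+1 -> R, only entries x a b with a < b
   being meaningful. *)

Section Defs.
Variables (R : realType) (n N : nat).
Variables (C : rat) (d : 'I_N -> 'I_n -> rat) (p : 'I_N -> R) (w : 'I_n -> rat)
          (b : 'I_n -> nat).

Definition cv (v : 'I_n) : 'I_n.+1 := lift ord0 v.
Definition liftS (S : {set 'I_n}) : {set 'I_n.+1} := cv @: S.

Definition xsum (x : 'I_n.+1 -> 'I_n.+1 -> R) (P : 'I_n.+1 -> 'I_n.+1 -> bool) : R :=
  \sum_(a : 'I_n.+1) \sum_(b0 : 'I_n.+1 | (a < b0)%N && P a b0) x a b0.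

Definition xE (x : 'I_n.+1 -> 'I_n.+1 -> R) (S : {set 'I_n}) : R :=
  xsum x (fun a b0 => (a \in liftS S) && (b0 \in liftS S)).
Definition xEST (x : 'I_n.+1 -> 'I_n.+1 -> R) (S T : {set 'I_n}) : R :=
  xsum x (fun a b0 => ((a \in liftS S) && (b0 \in liftS T))
                      || ((a \in liftS T) && (b0 \in liftS S))).
Definition xdelta (x : 'I_n.+1 -> 'I_n.+1 -> R) (A : {set 'I_n.+1}) : R :=
  xsum x (fun a b0 => (a \in A) != (b0 \in A)).

Definition kxi (xi : 'I_N) (S : {set 'I_n}) : int :=
  Num.ceil ((\sum_(v in S) d xi v) / C).
Definition dbar (S : {set 'I_n}) : R :=
  \sum_xi p xi * ratr (\sum_(v in S) d xi v).

Definition inXsub (x : 'I_n.+1 -> 'I_n.+1 -> R) : Prop :=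
  (forall a b0 : 'I_n.+1, (a < b0)%N -> 0 <= x a b0 <= 2) /\
  (forall v : 'I_n, xdelta x [set cv v] = 2) /\
  (forall S : {set 'I_n}, S != set0 -> xE x S <= #|S|%:R - 1).

Definition inXcvrp (k : nat) (x : 'I_n.+1 -> 'I_n.+1 -> R) : Prop :=
  inXsub x /\ xdelta x [set ord0] = 2 * k%:R /\
  (forall S : {set 'I_n}, S != set0 ->
     xE x S <= #|S|%:R - (Num.ceil (dbar S / ratr C))%:~R).

Definition inX (cvrp : bool) (k : nat) (x : 'I_n.+1 -> 'I_n.+1 -> R) : Prop :=
  if cvrp then inXcvrp k x else inXsub x.

Definition is_route (r : seq 'I_n) : Prop := r != [::] /\ uniq r.

(* y \in Pi(r): for each scenario, there are flows f_i on the arcs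
   (v_i, v_{i+1}), i = 0..l (v_0 = v_{l+1} = depot), in [0,C], and g >= 0 with
   f_{i-1} + d(v_i) = f_i + g_{v_i} and g_{v_i} <= C y_{v_i}.
   Here f i is the flow on arc (v_i, v_{i+1}) and onth r i = Some v_{i+1}. *)
Definition in_Pi (r : seq 'I_n) (y : 'I_N -> 'I_n -> nat) : Prop :=
  forall xi : 'I_N, exists (f : nat -> R) (g : 'I_n -> R),
    (forall i, (i <= size r)%N -> 0 <= f i <= ratr C) /\
    (forall v, 0 <= g v) /\
    (forall i (v : 'I_n), onth r i = Some v ->
       f i + ratr (d xi v) = f i.+1 + g v /\ g v <= ratr C * (y xi v)%:R).

Definition b_ok : Prop :=
  forall r, is_route r ->
    exists y : 'I_N -> 'I_n -> nat, in_Pi r y /\ (forall xi v, (y xi v <= b v)%N).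

(* Partial routes H = (S_1,...,S_l), stored as a seq (index i = S_(i+1)). *)
Definition Hs (H : seq {set 'I_n}) (i : nat) : {set 'I_n} := nth set0 H i.

Definition partial_route (H : seq {set 'I_n}) : Prop :=
  (0 < size H)%N /\
  (forall i, (i < size H)%N -> Hs H i != set0) /\
  (forall i j, (i < size H)%N -> (j < size H)%N -> i <> j ->
     [disjoint Hs H i & Hs H j]) /\
  (forall i, (i.+1 < size H)%N -> #|Hs H i| = 1%N \/ #|Hs H i.+1| = 1%N).

(* V_+(H') for the sub-partial-route H' = (S_(i+1),...,S_(j+1)), i <= j < l *)
Definition VHsub (H : seq {set 'I_n}) (i j : nat) : {set 'I_n} :=
  \bigcup_(i <= t < j.+1) Hs H t.
Definition VH (H : seq {set 'I_n}) : {set 'I_n} := VHsub H 0 (size H).-1.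

Definition xH (x : 'I_n.+1 -> 'I_n.+1 -> R) (H : seq {set 'I_n}) : R :=
  \sum_(0 <= i < size H) xE x (Hs H i)
  + \sum_(0 <= i < (size H).-1) xEST x (Hs H i) (Hs H i.+1).

(* W_OF(x;H); the paper's index set {2, l-1} \cap [l] becomes, 0-based,
   the indices i < l with i = 1 or i = l-2 (each counted once). *)
Definition WOF (x : 'I_n.+1 -> 'I_n.+1 -> R) (H : seq {set 'I_n}) : R :=
  1 + (xH x H - #|VH H|%:R + 1)
  + \sum_(0 <= i < size H | (i == 1)%N || (i.+2 == size H)%N)
       (xE x (Hs H i) - #|Hs H i|%:R + 1).

Definition Lfeas (H : seq {set 'I_n}) (xi : 'I_N) (y : 'I_n -> R) : Prop :=
  (forall i j, (i <= j)%N -> (j < size H)%N ->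
     \sum_(v in VHsub H i j) y v >= (kxi xi (VHsub H i j))%:~R - 1) /\
  (forall v, y v <= (b v)%:R) /\ (forall v, 0 <= y v).

Definition Lstar_xi (H : seq {set 'I_n}) (xi : 'I_N) : R :=
  reals.inf (fun r : R => exists y, Lfeas H xi y /\ r = \sum_(v in VH H) ratr (w v) * y v).

Definition Lstar (H : seq {set 'I_n}) : R := \sum_xi p xi * Lstar_xi H xi.

(* multipliers: alpha xi S (only S <> set0 used), beta xi v *)
Definition inA (alpha : 'I_N -> {set 'I_n} -> R) (beta : 'I_N -> 'I_n -> R) : Prop :=
  (forall xi S, S != set0 -> 0 <= alpha xi S) /\
  (forall xi v, beta xi v <= 0) /\
  (forall xi v, w v = 0 ->
     beta xi v + \sum_(S : {set 'I_n} | (S != set0) && (v \in S)) alpha xi S <= 0).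

Definition nu (alpha : 'I_N -> {set 'I_n} -> R) (beta : 'I_N -> 'I_n -> R) : R :=
  \sum_xi \sum_(S : {set 'I_n} | S != set0) alpha xi S * ((kxi xi S)%:~R - #|S|%:R)
  + \sum_xi \sum_v beta xi v * (b v)%:R.

(* phi_v = (max_xi (beta + sum_{S ni v} alpha) / (p_xi w_v))^+ ; the initial
   value 0 of the iterated max realises the positive part (.)^+. *)
Definition phi (alpha : 'I_N -> {set 'I_n} -> R) (beta : 'I_N -> 'I_n -> R) (v : 'I_n) : R :=
  \big[Num.max/0]_xi
     ((beta xi v + \sum_(S : {set 'I_n} | (S != set0) && (v \in S)) alpha xi S)
        / (p xi * ratr (w v))).

Definition proj_ineq (alpha : 'I_N -> {set 'I_n} -> R) (beta : 'I_N -> 'I_n -> R) (x : 'I_n.+1 -> 'I_n.+1 -> R) (theta : 'I_n -> R) : Prop :=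
  \sum_(v | 0 < w v) phi alpha beta v * theta v >=
  \sum_xi \sum_(S : {set 'I_n} | S != set0) alpha xi S * xE x S + nu alpha beta.

Definition inP (cvrp : bool) (k : nat) (x : 'I_n.+1 -> 'I_n.+1 -> R) (theta : 'I_n -> R) : Prop :=
  inX cvrp k x /\
  exists y : 'I_N -> 'I_n -> R,
    (forall xi v, 0 <= y xi v <= (b v)%:R) /\
    (forall xi (S : {set 'I_n}), S != set0 ->
       \sum_(v in S) y xi v >= (kxi xi S)%:~R + xE x S - #|S|%:R) /\
    (forall v, 0 <= theta v) /\
    (forall v, theta v >= \sum_xi p xi * ratr (w v) * y xi v).
End Defs.

(* Main.v *)
Require Import Defs.
From HB Require Import structures.
From mathcomp Require Import all_boot all_order all_algebra.
From mathcomp Require Import reals.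
From mathcomp Require Import ring lra zify.
Set Implicit Arguments. Unset Strict Implicit. Unset Printing Implicit Defensive.
Import Order.TTheory GRing.Theory Num.Theory.
Local Open Scope ring_scope.

Section FM.
Variable R : realFieldType.

Definition dot (m : nat) (a y : nat -> R) : R := \sum_(j < m) a j * y j.

Lemma sum_delta (I : finType) (p : I) (g : I -> R) :
  \sum_i (i == p)%:R * g i = g p.
Proof.
rewrite (bigD1 p) //= eqxx mul1r big1 ?addr0 // => i /negbTE ->; by rewrite mul0r.
Qed.

Lemma dotS m a y : dot m.+1 a y = dot m a y + a m * y m.
Proof. by rewrite /dot big_ord_recr. Qed.

Lemma alt (m : nat) : forall (I : finType) (a : I -> nat -> R) (c : I -> R),
  ~ (exists y, forall i, c i <= dot m (a i) y) ->
  exists lam : I -> R, (forall i, 0 <= lam i) /\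
    (forall j, (j < m)%N -> \sum_i lam i * a i j = 0) /\ 0 < \sum_i lam i * c i.
Proof.
elim: m => [|m IH] I a c Hn.
  have [i ci] : exists i, 0 < c i.
    case: (boolP [exists i, 0 < c i]) => [/existsP //|/existsPn H].
    exfalso; apply: Hn; exists (fun _ => 0).
    by move=> i; rewrite /dot big_ord0; have := H i; rewrite -leNgt.
  exists (fun k => (k == i)%:R); split; first by move=> k; rewrite ler0n.
  split=> [j //|]; by rewrite sum_delta.
pose e i := a i m.
pose I' := ((I * I) + I)%type.
pose kap (i' : I') (i : I) : R := match i' with
  | inl (p, q) => if (0 < e p) && (e q < 0) then
        (i == p)%:R * (- e q) + (i == q)%:R * e p else 0
  | inr k => if e k == 0 then (i == k)%:R else 0 end.
have kap0 i' i : 0 <= kap i' i.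
  case: i' => [[p q]|k] /=; last by case: ifP; rewrite ?ler0n.
  case: ifP => // /andP[ep eq]; apply: addr_ge0; apply: mulr_ge0; rewrite ?ler0n //.
    by rewrite oppr_ge0 ltW.
  exact: ltW.
pose a' (i' : I') j := \sum_i kap i' i * a i j.
pose c' (i' : I') := \sum_i kap i' i * c i.
have kapE i' (g : I -> R) : \sum_i kap i' i * g i =
   match i' with
   | inl (p, q) => if (0 < e p) && (e q < 0) then - e q * g p + e p * g q else 0
   | inr k => if e k == 0 then g k else 0 end.
  case: i' => [[p q]|k] /=.
    case: ifP => _; last by rewrite big1 // => i _; rewrite mul0r.
    rewrite -[RHS]/(- e q * g p + e p * g q).
    under eq_bigr => i _ do rewrite mulrDl -!mulrA.
    by rewrite big_split /= !sum_delta.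
  case: ifP => _; last by rewrite big1 // => i _; rewrite mul0r.
  exact: sum_delta.
have [[y' Hy']|nf] := boolp.pselect (exists y, forall i', c' i' <= dot m (a' i') y); last first.
  have [lam' [l0 [lj lc]]] := IH _ a' c' nf.
  exists (fun i => \sum_i' lam' i' * kap i' i); split.
    by move=> i; apply: sumr_ge0 => i' _; apply: mulr_ge0.
  have exch (g : I -> R) : \sum_i (\sum_i' lam' i' * kap i' i) * g i =
      \sum_i' lam' i' * \sum_i kap i' i * g i.
    under eq_bigr => i _ do rewrite mulr_suml.
    rewrite exchange_big /=; apply: eq_bigr => i' _; rewrite mulr_sumr.
    by apply: eq_bigr => i _; rewrite mulrA.
  split; last by rewrite exch.
  move=> j; rewrite ltnS leq_eqVlt => /orP[/eqP->|jm]; last by rewrite exch; exact: lj.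
  rewrite exch big1 // => i' _; rewrite kapE.
  case: i' => [[p q]|k]; case: ifP => [|_]; rewrite ?mulr0 //.
    by move=> _; rewrite /e; apply/eqP; rewrite mulf_eq0; apply/orP; right; apply/eqP; ring.
  by move/eqP; rewrite /e => ->; rewrite mulr0.
exfalso; apply: Hn.
pose r i := c i - dot m (a i) y'.
have dotlin i' : dot m (a' i') y' = \sum_i kap i' i * dot m (a i) y'.
  rewrite /dot /a'.
  under eq_bigr => j _ do rewrite mulr_suml.
  rewrite exchange_big /=; apply: eq_bigr => i _; rewrite mulr_sumr.
  by apply: eq_bigr => j _; rewrite mulrA.
have hz k : e k = 0 -> r k <= 0.
  move=> ek; have := Hy' (inr k); rewrite dotlin /c' !kapE ek eqxx.
  by rewrite /r subr_le0.
have hpq p q : 0 < e p -> e q < 0 -> - e q * r p + e p * r q <= 0.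
  move=> ep eq; have := Hy' (inl (p, q)); rewrite dotlin /c' !kapE ep eq /=.
  rewrite /r !mulrBr; move: (- e q * _) (e p * _) (- e q * _) (e p * _) => X1 X2 X3 X4 h; lra.
pose B := - \sum_i `|r i / e i|.
pose t := \big[Num.max/B]_(p | 0 < e p) (r p / e p).
exists (fun j => if j == m then t else y' j) => i.
rewrite dotS eqxx.
have -> : dot m (a i) (fun j => if j == m then t else y' j) = dot m (a i) y'.
  by apply: eq_bigr => j _; rewrite ifN // neq_ltn ltn_ord.
suff H: r i <= e i * t by move: H; rewrite /r /e; move: (a i m * t) => X; lra.
have [ei0|ei0|ei0] := ltgtP (e i) 0; last by rewrite ei0 mul0r; exact: hz.
- rewrite -ler_ndivlMl // mulrC.
  apply: bigmax_le.
    have h1 : - `|r i / e i| <= r i / e i.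
      by rewrite lerNl; apply: le_trans (ler_norm _) _; rewrite normrN.
    apply: le_trans h1; rewrite /B lerN2 (bigD1 i) //= lerDl; exact: sumr_ge0.
  move=> p ep; set u := r p / e p; set v := r i / e i.
  have hu : r p = u * e p by rewrite /u divfK // gt_eqF.
  have hv : r i = v * e i by rewrite /v divfK // lt_eqF.
  have := hpq p i ep ei0; rewrite hu hv => h.
  have h2 : (e p * - e i) * (u - v) <= 0 by move: h; rewrite (_ : _ * (u - v) = - e i * (u * e p) + e p * (v * e i)) //; ring.
  rewrite -subr_le0; move: h2; rewrite pmulr_rle0 //; apply: mulr_gt0 => //; by rewrite oppr_gt0.
- rewrite -ler_pdivrMl // mulrC.
  by apply: le_bigmax_cond.
Qed.

Lemma dot_ext m a y y' : (forall j, (j < m)%N -> y j = y' j) -> dot m a y = dot m a y'.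
Proof. by move=> h; apply: eq_bigr => j _; rewrite h. Qed.

Lemma dot_extA m a a' y : (forall j, (j < m)%N -> a j = a' j) -> dot m a y = dot m a' y.
Proof. by move=> h; apply: eq_bigr => j _; rewrite h. Qed.

Lemma farkas (m : nat) (I : finType) (a : I -> nat -> R) (c : I -> R) (f : nat -> R) (g : R) :
  (exists y0, forall i, c i <= dot m (a i) y0) ->
  (forall y, (forall i, c i <= dot m (a i) y) -> g <= dot m f y) ->
  exists lam : I -> R, (forall i, 0 <= lam i) /\
    (forall j, (j < m)%N -> \sum_i lam i * a i j = f j) /\ g <= \sum_i lam i * c i.
Proof.
move=> [y0 Hy0] Himp.
pose a2 (k : I + bool) (j : nat) : R := match k with
  | inl i => if j == m then - c i else a i j
  | inr true => (j == m)%:R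
  | inr false => if j == m then g else - f j end.
pose c2 (k : I + bool) : R := match k with inr false => 1 | _ => 0 end.
have dA (z : nat -> R) i : dot m.+1 (a2 (inl i)) z = dot m (a i) z - c i * z m.
  rewrite dotS /a2 eqxx mulNr; congr (_ - _); apply: dot_extA => j jm.
  by rewrite ifN // neq_ltn jm.
have dT (z : nat -> R) : dot m.+1 (a2 (inr true)) z = z m.
  rewrite dotS /a2 eqxx mul1r /dot big1 ?add0r // => j _; by rewrite ltn_eqF ?mul0r.
have dF (z : nat -> R) : dot m.+1 (a2 (inr false)) z = - dot m f z + g * z m.
  rewrite dotS /a2 eqxx /dot -sumrN; congr (_ + _); apply: eq_bigr => j _.
  by rewrite ifN ?mulNr // neq_ltn ltn_ord.
have nf : ~ exists z, forall k, c2 k <= dot m.+1 (a2 k) z.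
  move=> [z Hz].
  have hA i : c i * z m <= dot m (a i) z by have := Hz (inl i); rewrite dA /= subr_ge0.
  have hT : 0 <= z m by have := Hz (inr true); rewrite dT.
  have hF : dot m f z <= g * z m - 1 by have := Hz (inr false); rewrite dF /=; lra.
  have [t0|] := ltP 0 (z m).
    pose y j := z j / z m.
    have dy (b : nat -> R) : dot m b y = dot m b z / z m.
      by rewrite /dot mulr_suml; apply: eq_bigr => j _; rewrite mulrA.
    have hy : forall i, c i <= dot m (a i) y by move=> i; rewrite dy ler_pdivlMr.
    have := Himp y hy; rewrite dy ler_pdivlMr // => h.
    move: h hF; move: (g * z m) => X; lra.
  rewrite le_eqVlt ltNge hT orbF => /eqP t0.
  rewrite t0 mulr0 in hF.
  pose s := dot m f y0 - g + 1.
  have s1 : 1 <= s by have := Himp y0 Hy0; rewrite /s; lra.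
  pose y j := y0 j + s * z j.
  have dy (b : nat -> R) : dot m b y = dot m b y0 + s * dot m b z.
    by rewrite /dot mulr_sumr -big_split; apply: eq_bigr => j _; rewrite /y mulrDr mulrCA.
  have : g <= dot m f y.
    apply: Himp => i; rewrite dy; have := hA i; rewrite t0 mulr0 => h.
    have := Hy0 i; have : 0 <= s * dot m (a i) z by apply: mulr_ge0 => //; lra.
    lra.
  rewrite dy; have : s * dot m f z <= - s by rewrite -mulrN1; apply: ler_wpM2l; lra.
  rewrite /s; lra.
have [lam [l0 [lj lc]]] := alt nf.
rewrite big_sumType /= big_bool /= in lc.
rewrite big1 ?add0r in lc; last by move=> i; rewrite mulr0.
rewrite mulr0 add0r mulr1 in lc.
have lm := lj m (ltnSn m); rewrite big_sumType /= big_bool /= eqxx mulr1 in lm.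
exists (fun i => lam (inl i) / lam (inr false)); split.
  by move=> i; apply: divr_ge0 => //; apply: ltW.
split.
  move=> j jm; have := lj j (ltnW jm); rewrite big_sumType /= big_bool /=.
  rewrite (ltn_eqF jm) mulr0 add0r.
  move=> h.
  have e1 : \sum_i lam (inl i) * a i j = lam (inr false) * f j.
    by move: h; rewrite mulrN => /eqP; rewrite subr_eq0 => /eqP.
  under eq_bigr => i _ do rewrite mulrAC.
  by rewrite -mulr_suml e1 [_ * f j]mulrC mulfK // lt0r_neq0.
under eq_bigr => i _ do rewrite mulrAC.
rewrite -mulr_suml ler_pdivlMr //.
rewrite (eq_bigr (fun i => - (lam (inl i) * c i))) in lm; last by move=> i _; rewrite mulrN.
rewrite sumrN in lm.
have := l0 (inr true); move: lm; rewrite [g * _]mulrC.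
move: (\sum_i _) (lam (inr true)) (lam (inr false) * g) => X Y Z; lra.
Qed.
End FM.


Section Comb.
Variables (R : realType) (n : nat) (x : 'I_n.+1 -> 'I_n.+1 -> R).
Hypothesis xnn : forall a b0 : 'I_n.+1, (a < b0)%N -> 0 <= x a b0.

Lemma xsumE P : xsum x P =
  \sum_(a : 'I_n.+1) \sum_(b0 : 'I_n.+1) (if (a < b0)%N && P a b0 then x a b0 else 0).
Proof. by apply: eq_bigr => a _; rewrite big_mkcond. Qed.

Lemma xsum_le (P Q : 'I_n.+1 -> 'I_n.+1 -> bool) :
  (forall a b0 : 'I_n.+1, (a < b0)%N -> P a b0 -> Q a b0) -> xsum x P <= xsum x Q.
Proof.
move=> h; rewrite !xsumE; apply: ler_sum => a _; apply: ler_sum => b0 _.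
case ab: (a < b0)%N => //=; case Pab: (P a b0); first by rewrite (h _ _ ab Pab).
by case: (Q a b0) => //; apply: xnn.
Qed.

Lemma xsum_add (P Q : 'I_n.+1 -> 'I_n.+1 -> bool) :
  (forall a b0 : 'I_n.+1, (a < b0)%N -> ~~ (P a b0 && Q a b0)) ->
  xsum x P + xsum x Q = xsum x (fun a b0 => P a b0 || Q a b0).
Proof.
move=> h; rewrite !xsumE -big_split; apply: eq_bigr => a _ /=.
rewrite -big_split; apply: eq_bigr => b0 _ /=.
case ab: (a < b0)%N => /=; last by rewrite addr0.
have := h _ _ ab; case: (P a b0); case: (Q a b0) => //= _; by rewrite ?addr0 ?add0r.
Qed.

Lemma mem_liftS (S : {set 'I_n}) (v : 'I_n) : (cv v \in liftS S) = (v \in S).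
Proof. by rewrite /liftS mem_imset //; apply: lift_inj. Qed.

Lemma liftS1 (v : 'I_n) : liftS [set v] = [set cv v].
Proof. by rewrite /liftS imset_set1. Qed.

Lemma liftSU (S T : {set 'I_n}) : liftS (S :|: T) = liftS S :|: liftS T.
Proof. by rewrite /liftS imsetU. Qed.

Lemma liftS_disj (S T : {set 'I_n}) a : [disjoint S & T] -> a \in liftS S -> a \notin liftS T.
Proof.
move=> dST /imsetP [v vS ->]; rewrite mem_liftS.
by apply/negP => vT; move: dST; rewrite disjoints_subset => /subsetP /(_ _ vS); rewrite inE vT.
Qed.

Lemma liftS_sub (S T : {set 'I_n}) : S \subset T -> liftS S \subset liftS T.
Proof. exact: imsetS. Qed.

Lemma xE1 (v : 'I_n) : xE x [set v] = 0.
Proof.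
rewrite /xE /xsum big1 // => a _; rewrite big1 // => b0 /andP [ab]; rewrite liftS1 !inE.
by move=> /andP [/eqP ea /eqP eb]; move: ab; rewrite ea eb ltnn.
Qed.

Lemma xESTC (S T : {set 'I_n}) : xEST x S T = xEST x T S.
Proof. by rewrite /xEST; apply: eq_bigr => a _; apply: eq_bigl => b0; rewrite orbC. Qed.

Lemma xEST_mono (S T S' T' : {set 'I_n}) : S \subset S' -> T \subset T' -> xEST x S T <= xEST x S' T'.
Proof.
move=> /liftS_sub /subsetP h1 /liftS_sub /subsetP h2; apply: xsum_le => a b0 _.
by case/orP => /andP [h h']; apply/orP; [left|right]; apply/andP; split; auto.
Qed.

Lemma xE_mono (S T : {set 'I_n}) : S \subset T -> xE x S <= xE x T.
Proof.
move=> /liftS_sub /subsetP h1; apply: xsum_le => a b0 _ /andP [h h']; apply/andP; split; auto.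
Qed.

Lemma xE_union (S T : {set 'I_n}) : [disjoint S & T] -> xE x S + xEST x S T + xE x T <= xE x (S :|: T).
Proof.
move=> dST.
rewrite /xE /xEST xsum_add; last first.
  move=> a b0 _; apply/negP => /andP [/andP [aS bS]] /orP [] /andP [h1 h2].
    by move: (liftS_disj dST bS); rewrite h2.
  by move: (liftS_disj dST aS); rewrite h1.
rewrite xsum_add; last first.
  move=> a b0 _; apply/negP => /andP [] /orP [/andP [aS bS]|] ; last first.
    case/orP => /andP [h1 h2] /andP [h3 h4].
      by move: (liftS_disj dST h1); rewrite h3.
    by move: (liftS_disj dST h2); rewrite h4.
  by move=> /andP [h3 h4]; move: (liftS_disj dST aS); rewrite h3.
apply: xsum_le => a b0 _; rewrite liftSU !inE.
by move: (a \in liftS S) (a \in liftS T) (b0 \in liftS S) (b0 \in liftS T) => [] [] [] [].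
Qed.

Lemma xEST_deg (v : 'I_n) (S T : {set 'I_n}) : v \notin S -> v \notin T -> [disjoint S & T] ->
  xEST x [set v] S + xEST x [set v] T <= xdelta x [set cv v].
Proof.
move=> vS vT dST.
have F c : ~~ ((c == cv v) && (c \in liftS S)) && ~~ ((c == cv v) && (c \in liftS T))
      && ~~ ((c \in liftS S) && (c \in liftS T)).
  apply/andP; split; [apply/andP; split|]; apply/negP.
  - by move=> /andP [/eqP -> ]; rewrite mem_liftS (negbTE vS).
  - by move=> /andP [/eqP -> ]; rewrite mem_liftS (negbTE vT).
  - by move=> /andP [h1 h2]; move: (liftS_disj dST h1); rewrite h2.
rewrite /xEST /xdelta xsum_add; last first.
  move=> a b0 _; rewrite liftS1 !inE; move: (F a) (F b0).
  by move: (a == cv v) (b0 == cv v) (a \in liftS S) (a \in liftS T) (b0 \in liftS S) (b0 \in liftS T) => [] [] [] [] [] [].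
apply: xsum_le => a b0 _; rewrite liftS1 !inE; move: (F a) (F b0).
by move: (a == cv v) (b0 == cv v) (a \in liftS S) (a \in liftS T) (b0 \in liftS S) (b0 \in liftS T) => [] [] [] [] [] [].
Qed.


Lemma mem_bigU (T : finType) (r : seq nat) (F : nat -> {set T}) (v : T) :
  (v \in \big[@setU T/set0]_(t <- r) F t) = has (fun t => v \in F t) r.
Proof. by elim: r => [|t r IH]; rewrite ?big_nil ?inE // big_cons inE IH. Qed.

Variable H : seq {set 'I_n}.
Hypothesis pr : partial_route H.
Notation l := (size H).
Hypothesis Hx : inXsub x.

Lemma Hs_n0 t : (t < l)%N -> Hs H t != set0.
Proof. by case: pr => _ [h _]; apply: h. Qed.
Lemma Hs_disj t1 t2 : (t1 < l)%N -> (t2 < l)%N -> t1 <> t2 -> [disjoint Hs H t1 & Hs H t2].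
Proof. by case: pr => _ [_ [h _]]; apply: h. Qed.
Lemma Hs_single t : (t.+1 < l)%N -> #|Hs H t| = 1%N \/ #|Hs H t.+1| = 1%N.
Proof. by case: pr => _ [_ [_ h]]; apply: h. Qed.

Lemma subtour (S : {set 'I_n}) : S != set0 -> xE x S <= #|S|%:R - 1.
Proof. by case: Hx => _ [_ h]; apply: h. Qed.

Lemma deg2 (v : 'I_n) : xdelta x [set cv v] = 2.
Proof. by case: Hx => _ [h _]; apply: h. Qed.

Definition xHr i j := \sum_(i <= t < j.+1) xE x (Hs H t) + \sum_(i <= t < j) xEST x (Hs H t) (Hs H t.+1).

Lemma xHr_split i m j : (i <= m < j)%N ->
  xHr i j = xHr i m + xEST x (Hs H m) (Hs H m.+1) + xHr m.+1 j.
Proof.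
case/andP=> im mj; rewrite /xHr (big_cat_nat _ (n:=m.+1)) /=; try lia.
rewrite [\sum_(i <= t < j) _](big_cat_nat _ (n:=m)) /=; try lia.
rewrite [\sum_(m <= t < j) _](big_cat_nat _ (n:=m.+1)) /= ?big_nat1; try lia.
set A := \sum_(i <= t < m.+1) _. set B := \sum_(m.+1 <= t < j.+1) _.
set C := \sum_(i <= t < m) _. set D := \sum_(m.+1 <= t < j) _. lra.
Qed.

Lemma xHr_ii i : xHr i i = xE x (Hs H i).
Proof. by rewrite /xHr big_nat1 big_geq // addr0. Qed.

Lemma xH_full : (0 < l)%N -> xH x H = xHr 0 l.-1.
Proof. by move=> l0; rewrite /xH /xHr prednK. Qed.

Lemma mem_VHsub v i j : (v \in VHsub H i j) = [exists t : 'I_l, [&& (i <= t)%N, (t <= j)%N & v \in Hs H t]].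
Proof.
rewrite /VHsub mem_bigU; apply/hasP/existsP => [[t]|[t /and3P [it tj vt]]].
  rewrite mem_index_iota => /andP [it tj] vt.
  have tl : (t < l)%N.
    by rewrite ltnNge; apply/negP => lt; move: vt; rewrite /Hs nth_default // inE.
  by exists (Ordinal tl); rewrite /= it vt -ltnS tj.
by exists (nat_of_ord t) => //; rewrite mem_index_iota it ltnS.
Qed.

Lemma VHsub_split i m j : (i <= m < j)%N -> VHsub H i j = VHsub H i m :|: VHsub H m.+1 j.
Proof.
case/andP=> im mj; rewrite /VHsub (big_cat_nat _ (n:=m.+1)) //; lia.
Qed.

Lemma VHsub_ii i : VHsub H i i = Hs H i.
Proof. by rewrite /VHsub big_nat1. Qed.

Lemma Hs_sub_VHsub t i j : (i <= t <= j)%N -> Hs H t \subset VHsub H i j.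
Proof.
case/andP => it tj; apply/subsetP => v vt.
have tl : (t < l)%N.
  by rewrite ltnNge; apply/negP => lt; move: vt; rewrite /Hs nth_default // inE.
by rewrite mem_VHsub; apply/existsP; exists (Ordinal tl); rewrite /= it tj vt.
Qed.

Lemma VHsub_n0 i j : (i <= j < l)%N -> VHsub H i j != set0.
Proof.
case/andP=> ij jl; have := Hs_n0 (leq_ltn_trans ij jl); case/set0Pn => v vi.
by apply/set0Pn; exists v; apply: (subsetP (Hs_sub_VHsub (i:=i) (j:=j) _)) vi; rewrite leqnn ij.
Qed.

Lemma VHsub_disj i m j : (j < l)%N -> [disjoint VHsub H i m & VHsub H m.+1 j].
Proof.
move=> jl; rewrite -setI_eq0; apply/eqP/setP => v; rewrite !inE !mem_VHsub.
apply/negP => /andP [/existsP [t1 /and3P [_ t1m v1]] /existsP [t2 /and3P [mt2 t2j v2]]].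
have := Hs_disj (ltn_ord t1) (ltn_ord t2).
have ne : nat_of_ord t1 <> nat_of_ord t2 by move=> e; move: mt2; rewrite -e ltnNge t1m.
move/(_ ne); rewrite disjoints_subset => /subsetP /(_ _ v1); by rewrite inE v2.
Qed.

Lemma card_VHsub_split i m j : (i <= m < j)%N -> (j < l)%N ->
  #|VHsub H i j| = (#|VHsub H i m| + #|VHsub H m.+1 j|)%N.
Proof.
move=> imj jl; rewrite (VHsub_split imj) cardsU.
have := VHsub_disj i m jl; rewrite -setI_eq0 => /eqP ->; by rewrite cards0 subn0.
Qed.

Lemma xHr_le i j : (i <= j < l)%N -> xHr i j <= xE x (VHsub H i j).
Proof.
case/andP; elim: j => [|j IH] ij jl.
  by move: ij; rewrite leqn0 => /eqP ->; rewrite xHr_ii VHsub_ii.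
move: ij; rewrite leq_eqVlt => /orP [/eqP <-|]; first by rewrite xHr_ii VHsub_ii.
rewrite ltnS => ij.
have ij1 : (i <= j < j.+1)%N by rewrite ij ltnSn.
rewrite (xHr_split ij1) xHr_ii (VHsub_split ij1) VHsub_ii.
apply: le_trans (xE_union _); last by rewrite -VHsub_ii; apply: VHsub_disj.
rewrite lerD2r lerD // ?IH // ?(ltnW jl) //.
by apply: xEST_mono => //; apply: Hs_sub_VHsub; rewrite ij leqnn.
Qed.

Definition sl (S : {set 'I_n}) := #|S|%:R - 1 - xE x S.

Lemma sl_ge0 t : (t < l)%N -> 0 <= sl (Hs H t).
Proof. by move=> tl; rewrite /sl subr_ge0 subtour // Hs_n0. Qed.

Lemma notin_disj (A B : {set 'I_n}) (u : 'I_n) : [disjoint A & B] -> u \in A -> u \notin B.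
Proof. by rewrite disjoints_subset => /subsetP h /h; rewrite inE. Qed.

Lemma single (t : nat) : #|Hs H t| = 1%N -> exists u, Hs H t = [set u].
Proof. by move/eqP/cards1P. Qed.

Lemma leftb i' : (i'.+1 < l)%N ->
  xHr 0 i' + xEST x (Hs H i') (Hs H i'.+1) <=
  #|VHsub H 0 i'|%:R + (if i' == 0%N then sl (Hs H 1) else 0).
Proof.
move=> il.
have h0 : 0 <= (if i' == 0%N then sl (Hs H 1) else 0).
  case: ifP => // /eqP e; apply: sl_ge0; rewrite e in il; exact: il.
have i'l : (i' < l)%N by apply: ltnW.
case: (Hs_single il) => [c1|c1]; last first.
  have [z ez] := single c1.
  have sp : (0 <= i' < i'.+1)%N by rewrite leq0n ltnSn.
  have e := xHr_split sp; rewrite xHr_ii ez xE1 addr0 in e.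
  have := xHr_le (i:=0) (j:=i'.+1); rewrite leq0n il => /(_ isT).
  rewrite e -ez => h; apply: (le_trans h).
  apply: le_trans (subtour (VHsub_n0 _)) _; first by rewrite leq0n.
  rewrite (card_VHsub_split sp) // VHsub_ii c1 natrD.
  lra.
have [u eu] := single c1.
case: i' il i'l c1 eu h0 => [|i''] il i'l c1 eu h0.
  rewrite eqxx xHr_ii eu xE1 add0r.
  have sp : (0 <= 0 < 1)%N by [].
  have := xE_union (VHsub_disj 0 0 il); rewrite -VHsub_split // !VHsub_ii eu xE1 add0r.
  move=> h; have := subtour (VHsub_n0 (i:=0) (j:=1) il).
  rewrite (card_VHsub_split sp) // !VHsub_ii eu cards1 /sl natrD.
  move: h; rewrite -eu; lra.
have sp : (0 <= i'' < i''.+1)%N by rewrite leq0n ltnSn.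
rewrite (xHr_split sp) xHr_ii eu xE1 addr0 /=.
rewrite (card_VHsub_split sp) // VHsub_ii eu cards1 natrD.
have h1 : xHr 0 i'' <= #|VHsub H 0 i''|%:R - 1.
  apply: le_trans (xHr_le _) _; first by rewrite leq0n; apply: ltnW.
  by apply: subtour; apply: VHsub_n0; rewrite leq0n; apply: ltnW.
have h2 := deg2 u.
have d1 : [disjoint Hs H i''.+1 & Hs H i''] by apply: Hs_disj => //; [apply: ltnW | lia].
have d2 : [disjoint Hs H i''.+1 & Hs H i''.+2] by apply: Hs_disj => //; lia.
have d3 : [disjoint Hs H i'' & Hs H i''.+2] by apply: Hs_disj => //; try lia.
have uin : u \in Hs H i''.+1 by rewrite eu set11.
have := xEST_deg (notin_disj d1 uin) (notin_disj d2 uin) d3.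
rewrite h2 -eu xESTC; lra.
Qed.

Lemma rightb j : (j.+1 < l)%N ->
  xEST x (Hs H j) (Hs H j.+1) + xHr j.+1 l.-1 <=
  #|VHsub H j.+1 l.-1|%:R + (if j.+2 == l then sl (Hs H j) else 0).
Proof.
move=> jl.
have jl' : (j < l)%N by apply: ltnW.
have h0 : 0 <= (if j.+2 == l then sl (Hs H j) else 0).
  by case: ifP => // _; apply: sl_ge0.
have l1 : (l.-1 < l)%N by lia.
case: (Hs_single jl) => [c1|c1].
  have [u eu] := single c1.
  have sp : (j <= j < l.-1)%N by rewrite leqnn; lia.
  have := xHr_le (i:=j) (j:=l.-1); rewrite l1 (ltnW (leq_ltn_trans (leqnn j) _)) ?andbT; last by lia.
  move=> /(_ isT); rewrite (xHr_split sp) xHr_ii eu xE1 add0r -eu => h.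
  apply: (le_trans h).
  apply: le_trans (subtour (VHsub_n0 _)) _; first by rewrite l1 andbT; lia.
  rewrite (card_VHsub_split sp) // VHsub_ii eu cards1 natrD -eu; lra.
have [z ez] := single c1.
case: (boolP (j.+2 == l)) => [/eqP e2|ne2].
  have -> : l.-1 = j.+1 by rewrite -e2.
  rewrite xHr_ii ez xE1 addr0.
  have sp : (j <= j < j.+1)%N by rewrite leqnn ltnSn.
  have := xE_union (VHsub_disj j j jl); rewrite -VHsub_split // !VHsub_ii ez xE1 addr0.
  move=> h; have := subtour (VHsub_n0 (i:=j) (j:=j.+1) _); rewrite leqnSn jl => /(_ isT).
  rewrite (card_VHsub_split sp) // !VHsub_ii ez cards1 /sl !natrD.
  move: h; lra.
have j2 : (j.+2 < l)%N by lia.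
have sp : (j.+1 <= j.+1 < l.-1)%N by rewrite leqnn; lia.
rewrite (xHr_split sp) xHr_ii ez xE1 add0r.
rewrite (card_VHsub_split sp) // VHsub_ii ez cards1 natrD.
have h1 : xHr j.+2 l.-1 <= #|VHsub H j.+2 l.-1|%:R - 1.
  apply: le_trans (xHr_le _) _; first by lia.
  by apply: subtour; apply: VHsub_n0; lia.
have h2 := deg2 z.
have d1 : [disjoint Hs H j.+1 & Hs H j] by apply: Hs_disj => //; lia.
have d2 : [disjoint Hs H j.+1 & Hs H j.+2] by apply: Hs_disj => //; lia.
have d3 : [disjoint Hs H j & Hs H j.+2] by apply: Hs_disj => //; lia.
have zin : z \in Hs H j.+1 by rewrite ez set11.
have := xEST_deg (notin_disj d1 zin) (notin_disj d2 zin) d3.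
rewrite h2 -ez [xEST x (Hs H j) _]xESTC; lra.
Qed.

Definition Tsum := \sum_(0 <= t < l | (t == 1)%N || (t.+2 == l)%N) sl (Hs H t).
Definition Dv := #|VH H|%:R - 1 - xH x H + Tsum.

Lemma WOF_D : WOF x H = 1 - Dv.
Proof.
rewrite /WOF /Dv /Tsum.
rewrite (eq_bigr (fun t => - sl (Hs H t))); last by move=> t _; rewrite /sl; ring.
rewrite sumrN; ring.
Qed.

Lemma TsumE : Tsum = \sum_(t < l | (nat_of_ord t == 1)%N || ((nat_of_ord t).+2 == l)%N) sl (Hs H t).
Proof. by rewrite /Tsum big_mkord. Qed.

Lemma Tsum_ge0 : 0 <= Tsum.
Proof. by rewrite TsumE; apply: sumr_ge0 => t _; apply: sl_ge0. Qed.

Lemma Tsum_ge1 t : (t < l)%N -> (t == 1)%N || (t.+2 == l)%N -> sl (Hs H t) <= Tsum.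
Proof.
move=> tl Pt; rewrite TsumE (bigD1 (Ordinal tl)) //= lerDl.
by apply: sumr_ge0 => k _; apply: sl_ge0.
Qed.

Lemma Tsum_ge2 t1 t2 : (t1 < l)%N -> (t2 < l)%N -> (t1 == 1)%N || (t1.+2 == l)%N ->
  (t2 == 1)%N || (t2.+2 == l)%N -> t1 <> t2 -> sl (Hs H t1) + sl (Hs H t2) <= Tsum.
Proof.
move=> t1l t2l P1 P2 ne; rewrite TsumE (bigD1 (Ordinal t1l)) //= lerD2l.
rewrite (bigD1 (Ordinal t2l)) /=; last first.
  by rewrite P2 /=; apply/eqP => /(congr1 val) /= e; apply: ne.
by rewrite lerDl; apply: sumr_ge0 => k _; apply: sl_ge0.
Qed.

Lemma VH_full : VH H = VHsub H 0 l.-1.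
Proof. by []. Qed.

Lemma Hpart_ge0 : (0 < l)%N -> 0 <= #|VH H|%:R - 1 - xH x H.
Proof.
move=> l0; rewrite xH_full // VH_full.
have h1 := xHr_le (i:=0) (j:=l.-1); have h2 := subtour (VHsub_n0 (i:=0) (j:=l.-1) _).
have c : (0 <= l.-1 < l)%N by lia.
move: (h1 c) (h2 c); lra.
Qed.

Lemma Dv_ge0 : (0 < l)%N -> 0 <= Dv.
Proof. move=> l0; have := Hpart_ge0 l0; have := Tsum_ge0; rewrite /Dv; lra. Qed.

Lemma key i j : (i <= j < l)%N -> sl (VHsub H i j) <= Dv.
Proof.
case/andP => ij jl.
have l0 : (0 < l)%N by lia.
case: (boolP ((i == j) && ((i == 1)%N || (i.+2 == l)%N))) => [/andP [/eqP eij Pi]|nsp].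
  rewrite -eij VHsub_ii; apply: le_trans (Tsum_ge1 _ Pi) _; first by lia.
  have := Hpart_ge0 l0; rewrite /Dv; lra.
pose LC := if i is i'.+1 then xHr 0 i' + xEST x (Hs H i') (Hs H i) else 0.
pose LN : R := if i is i'.+1 then #|VHsub H 0 i'|%:R else 0.
pose LS := if i == 1%N then sl (Hs H 1) else 0.
pose RC := if (j.+1 < l)%N then xEST x (Hs H j) (Hs H j.+1) + xHr j.+1 l.-1 else 0.
pose RN : R := if (j.+1 < l)%N then #|VHsub H j.+1 l.-1|%:R else 0.
pose RS := if j.+2 == l then sl (Hs H j) else 0.
have eLR : xHr 0 l.-1 = LC + xHr i j + RC /\ #|VHsub H 0 l.-1|%:R = LN + #|VHsub H i j|%:R + RN.
  have eR : xHr i l.-1 = xHr i j + RC /\ #|VHsub H i l.-1|%:R = #|VHsub H i j|%:R + RN.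
    rewrite /RC /RN; case: ifP => jl1; last by rewrite (_ : l.-1 = j) ?addr0 //; lia.
    have sp : (i <= j < l.-1)%N by lia.
    by rewrite (xHr_split sp) (card_VHsub_split sp) ?natrD; [split; ring | lia].
  rewrite /LC /LN; case: (i) ij eR => [|i'] ij [eR1 eR2].
    by rewrite eR1 eR2; split; ring.
  have sp : (0 <= i' < l.-1)%N by lia.
  by rewrite (xHr_split sp) (card_VHsub_split sp) ?natrD ?eR1 ?eR2; [split; ring | lia].
have bL : LC <= LN + LS.
  rewrite /LC /LN /LS; case: (i) ij nsp => [|i'] ij nsp; first by rewrite addr0.
  have := leftb (i':=i') _; rewrite (_ : (i'.+1 == 1)%N = (i' == 0)%N) //; apply; lia.
have bR : RC <= RN + RS.
  rewrite /RC /RN /RS; case: ifP => jl1.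
    exact: rightb.
  by case: ifP => [/eqP e|]; [lia | rewrite addr0].
have bT : LS + RS <= Tsum.
  rewrite /LS /RS.
  have [i1|i1] := eqVneq i 1%N; have [j2|j2] := eqVneq j.+2 l.
  - by apply: Tsum_ge2; lia.
  - by rewrite addr0; apply: Tsum_ge1; lia.
  - by rewrite add0r; apply: Tsum_ge1; lia.
  - rewrite addr0; exact: Tsum_ge0.
have hA := xHr_le (i:=i) (j:=j); rewrite ij jl in hA; have {}hA := hA isT.
rewrite /Dv VH_full xH_full //; case: eLR => -> ->.
move: bL bR bT hA; rewrite /sl; lra.
Qed.

End Comb.


Section LP.
Variables (R : realType) (n N : nat) (C : rat) (d : 'I_N -> 'I_n -> rat)
  (w : 'I_n -> rat) (b : 'I_n -> nat) (H : seq {set 'I_n}) (xi : 'I_N).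
Hypothesis w0 : forall v, 0 <= w v.

Lemma ratr_w0 v : 0 <= (ratr (w v) : R).
Proof. by rewrite ler0q. Qed.

Notation L := (Lstar_xi R C d w b H xi).

Lemma Lstar_le y : Lfeas C d b H xi y -> L <= \sum_(v in VH H) ratr (w v) * y v.
Proof.
move=> hy; rewrite /Lstar_xi; apply: ge_inf; last by exists y.
exists 0 => r [y' [[_ [_ y0]] ->]]; apply: sumr_ge0 => v _; apply: mulr_ge0 => //.
exact: ratr_w0.
Qed.

Lemma Lstar_ge0 : 0 <= L.
Proof.
rewrite /Lstar_xi.
have [[y hy]|ne] := boolp.pselect (exists y : 'I_n -> R, Lfeas C d b H xi y).
  apply: lb_le_inf.
    by exists (\sum_(v in VH H) ratr (w v) * y v); exists y.
  move=> r [y' [[_ [_ y0]] ->]]; apply: sumr_ge0 => v _; apply: mulr_ge0 => //.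
  exact: ratr_w0.
rewrite inf_out // => -[[r [y' [hy _]]] _]; apply: ne; by exists y'.
Qed.

Lemma prim (tau : R) (y : 'I_n -> R) : 0 <= tau <= 1 ->
  (forall v, 0 <= y v <= (b v)%:R) ->
  (forall i j, (i <= j)%N -> (j < size H)%N ->
     (kxi C d xi (VHsub H i j))%:~R - 1 - tau <= \sum_(v in VHsub H i j) y v) ->
  (1 - tau) * L <= \sum_(v in VH H) ratr (w v) * y v.
Proof.
move=> /andP [t0 t1] hy hc.
have S0 : 0 <= \sum_(v in VH H) ratr (w v) * y v.
  by apply: sumr_ge0 => v _; apply: mulr_ge0; [exact: ratr_w0 | case/andP: (hy v)].
have [t1'|tl1] := eqVneq tau 1; first by rewrite t1' subrr mul0r.
have tl : 0 < 1 - tau by rewrite subr_gt0 lt_neqAle tl1 t1.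
pose y' v := Num.min (y v / (1 - tau)) (b v)%:R.
have y'le v : y' v <= y v / (1 - tau) by rewrite /y' ge_min lexx.
have hf : Lfeas C d b H xi y'.
  split; last split.
  - move=> i j ij jl; set A := VHsub H i j.
    pose P v := (b v)%:R < y v / (1 - tau).
    rewrite (bigID P) /=.
    have e1 : \sum_(v in A | P v) y' v = (\sum_(v in A | P v) b v)%:R.
      rewrite natr_sum; apply: eq_bigr => v /andP [_ Pv].
      by rewrite /y' min_r // ltW.
    have e2 : \sum_(v in A | ~~ P v) y' v = (\sum_(v in A | ~~ P v) y v) / (1 - tau).
      rewrite mulr_suml; apply: eq_bigr => v /andP [_ Pv].
      by rewrite /y' min_l // leNgt.
    rewrite e1 e2.
    have := hc i j ij jl; rewrite (bigID P) /= -/A.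
    have hB : \sum_(v in A | P v) y v <= (\sum_(v in A | P v) b v)%:R.
      by rewrite natr_sum; apply: ler_sum => v _; case/andP: (hy v).
    have hU : 0 <= \sum_(v in A | ~~ P v) y v.
      by apply: sumr_ge0 => v _; case/andP: (hy v).
    move: (\sum_(v in A | P v) b v)%N hB => B hB.
    set K := kxi C d xi A.
    have [KB|KB] := lerP (K - 1) B%:Z.
      have : (K - 1)%:~R <= B%:R :> R by rewrite -(ler_int R) in KB.
      rewrite rmorphB /= => h1 _.
      apply: le_trans h1 _; rewrite lerDl; apply: divr_ge0 => //; exact: ltW.
    have : B%:R + 1 <= (K - 1)%:~R :> R.
      rewrite -lezD1 -(ler_int R) in KB; move: KB; rewrite rmorphD /=.
      by rewrite (_ : (B%:Z)%:~R = B%:R :> R).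
    rewrite rmorphB /= => h1 h2.
    set U := \sum_(v in A | ~~ P v) y v in hU h2 *.
    set Kr := (K%:~R : R) in h1 h2 *.
    rewrite rmorph1 in h1.
    have h3 : (Kr - 1 - B%:R) * (1 - tau) <= U.
      have hZ : 0 <= (Kr - 1 - B%:R - 1) * tau by apply: mulr_ge0 => //; lra.
      have -> : (Kr - 1 - B%:R) * (1 - tau) = Kr - 1 - B%:R - (Kr - 1 - B%:R - 1) * tau - tau by ring.
      move: hZ h2 hB; move: ((Kr - 1 - B%:R - 1) * tau) (\sum_(v in A | P v) y v) => Z Y; lra.
    have : Kr - 1 - B%:R <= U / (1 - tau) by rewrite ler_pdivlMr.
    lra.
  - by move=> v; rewrite /y' ge_min lexx orbT.
  - move=> v; rewrite /y' le_min ler0n andbT; apply: divr_ge0; [by case/andP: (hy v)| exact: ltW].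
have := Lstar_le hf => h.
rewrite mulrC -ler_pdivlMr // mulr_suml.
apply: le_trans h _; apply: ler_sum => v _; rewrite -[ratr (w v) * y v / _]mulrA; apply: ler_wpM2l; first exact: ratr_w0.
exact: y'le.
Qed.

Definition ext (g : 'I_n -> R) (q : nat) : R :=
  if (insub q : option 'I_n) is Some v then g v else 0.

Lemma ext_val g (v : 'I_n) : ext g v = g v.
Proof. by rewrite /ext valK. Qed.

Lemma dot_helper (al : R) (g : 'I_n -> R) (Y : nat -> R) :
  dot n.+1 (fun q => if q == n then al else ext g q) Y = \sum_v g v * Y v + al * Y n.
Proof.
rewrite dotS eqxx; congr (_ + _); apply: eq_bigr => v _.
by rewrite ifN ?ext_val // neq_ltn ltn_ord.
Qed.

Lemma sum_ind (A : {set 'I_n}) (F : 'I_n -> R) :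
  \sum_v (v \in A)%:R * F v = \sum_(v in A) F v.
Proof.
rewrite [RHS]big_mkcond; apply: eq_bigr => v _; case: (v \in A); by rewrite ?mul1r ?mul0r.
Qed.

Lemma sum_delta' (u : 'I_n) (F : 'I_n -> R) : \sum_v (v == u)%:R * F v = F u.
Proof. exact: sum_delta. Qed.

Notation l := (size H).
Notation kk i j := ((kxi C d xi (VHsub H i j))%:~R - 1 : R).

Lemma dual : exists (pi : 'I_l * 'I_l -> R) (sg : 'I_n -> R) (rho : R),
  [/\ (forall ij, 0 <= pi ij), (forall v, 0 <= sg v), 0 <= rho,
      (forall ij, pi ij != 0 -> (ij.1 <= ij.2)%N) &
  [/\ (forall v, \sum_ij pi ij * (v \in VHsub H ij.1 ij.2)%:R - sg v <= (v \in VH H)%:R * ratr (w v)),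
      \sum_ij pi ij <= L + rho &
      L + rho <= \sum_ij pi ij * kk ij.1 ij.2 - \sum_v sg v * (b v)%:R]].
Proof.
have [[y0 hy0]|nf] := boolp.pselect (exists y : 'I_n -> R, Lfeas C d b H xi y); last first.
  have L0 : L = 0.
    rewrite /Lstar_xi inf_out // => -[[r [y' [hy _]]] _]; apply: nf; by exists y'.
  exists (fun _ => 0), (fun _ => 0), 0; rewrite L0; split => //.
    by move=> ij; rewrite eqxx.
  split.
  - move=> v; rewrite big1 ?subr0 => [|ij _]; last by rewrite mul0r.
    by apply: mulr_ge0; rewrite ?ler0n ?ratr_w0.
  - by rewrite big1 ?addr0.
  - by rewrite addr0 big1 ?big1 ?subr0 ?mul0r // => ij _; rewrite mul0r.
pose I := (('I_l * 'I_l + 'I_n * bool) + bool)%type.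
pose al (k : I) : R := match k with
  | inl (inl (i, j)) => (i <= j)%:R | inl (inr _) => 0 | inr true => 1 | inr false => -1 end.
pose g (k : I) : 'I_n -> R := match k with
  | inl (inl (i, j)) => fun v => (i <= j)%:R * (v \in VHsub H i j)%:R
  | inl (inr (u, true)) => fun v => - (v == u)%:R
  | inl (inr (u, false)) => fun v => (v == u)%:R
  | inr _ => fun _ => 0 end.
pose a (k : I) (q : nat) : R := if q == n then al k else ext (g k) q.
pose c (k : I) : R := match k with
  | inl (inl (i, j)) => (i <= j)%:R * kk i j
  | inl (inr (u, true)) => - (b u)%:R
  | inl (inr (u, false)) => 0
  | inr true => 0 | inr false => -1 end.
pose f (q : nat) : R := if q == n then L else ext (fun v => (v \in VH H)%:R * ratr (w v)) q.
have da k Y : dot n.+1 (a k) Y = \sum_v g k v * Y v + al k * Y n by rewrite dot_helper.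
have hfeas : exists Y, forall k, c k <= dot n.+1 (a k) Y.
  exists (fun q => if q == n then 0 else ext y0 q) => k; rewrite da eqxx mulr0 addr0.
  have eY v : (if nat_of_ord v == n then 0 else ext y0 v) = y0 v.
    by rewrite ifN ?ext_val // neq_ltn ltn_ord.
  under eq_bigr => v _ do rewrite eY.
  case: hy0 => [hc [hb hp]].
  case: k => [[[i j]|[u []]]|[]] /=.
  - case: leqP => ij; last by rewrite !mul0r big1 // => v _; rewrite !mul0r.
    rewrite mul1r; under eq_bigr => v _ do rewrite mul1r. rewrite sum_ind; apply: hc => //; exact: ltn_ord.
  - by rewrite (eq_bigr (fun v => - ((v == u)%:R * y0 v))) ?sumrN ?sum_delta' ?lerN2 // => v _; rewrite mulNr.
  - by rewrite sum_delta'.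
  - by rewrite big1 => [|v _]; [lra | rewrite mul0r].
  - by rewrite big1 => [|v _]; [lra | rewrite mul0r].
have himp : forall Y, (forall k, c k <= dot n.+1 (a k) Y) -> L <= dot n.+1 f Y.
  move=> Y hY.
  have ef : dot n.+1 f Y = \sum_(v in VH H) ratr (w v) * Y v + L * Y n.
    by rewrite /f dot_helper; congr (_ + _); rewrite -sum_ind; apply: eq_bigr => v _; exact: esym (mulrA _ _ _).
  rewrite ef.
  have t0 : 0 <= Y n by have := hY (inr true); rewrite da big1 ?add0r ?mul1r // => v _; rewrite mul0r.
  have t1 : Y n <= 1 by have := hY (inr false); rewrite da big1 ?add0r ?mulN1r ?lerN2 // => v _; rewrite mul0r.
  have hb (v : 'I_n) : 0 <= Y v <= (b v)%:R.
    apply/andP; split.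
      by have := hY (inl (inr (v, false))); rewrite da /= mul0r addr0 sum_delta'.
    have := hY (inl (inr (v, true))); rewrite da /= mul0r addr0.
    by rewrite (eq_bigr (fun u => - ((u == v)%:R * Y u))) ?sumrN ?sum_delta' ?lerN2 // => u _; rewrite mulNr.
  have hc i j : (i <= j)%N -> (j < l)%N ->
      (kxi C d xi (VHsub H i j))%:~R - 1 - Y n <= \sum_(v in VHsub H i j) Y v.
    move=> ij jl; have il : (i < l)%N by apply: leq_ltn_trans ij jl.
    have := hY (inl (inl (Ordinal il, Ordinal jl))); rewrite da /= ij mul1r; under eq_bigr => v _ do rewrite mul1r. rewrite sum_ind.
    by move=> h; move: h; rewrite mul1r; lra.
  have := prim (tau := Y n) (y := fun v => Y v); rewrite t0 t1 => /(_ isT hb hc).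
  lra.
have [lam [l0 [lj lc]]] := farkas hfeas himp.
have dec (F : I -> R) : \sum_k F k = \sum_ij F (inl (inl ij)) +
    \sum_v (F (inl (inr (v, true))) + F (inl (inr (v, false)))) + (F (inr true) + F (inr false)).
  rewrite big_sumType big_sumType big_bool /=; congr (_ + _ + _).
  rewrite [RHS](eq_bigr (fun v => \sum_bo F (inl (inr (v, bo))))); last by move=> v _; rewrite big_bool.
  by rewrite pair_big /=; apply: eq_bigr => -[v bo] _.
pose pi (ij : 'I_l * 'I_l) := lam (inl (inl ij)) * (ij.1 <= ij.2)%:R.
pose sg v := lam (inl (inr (v, true))).
pose mu v := lam (inl (inr (v, false))).
exists pi, sg, (lam (inr false)).
have cv (v : 'I_n) : \sum_ij pi ij * (v \in VHsub H ij.1 ij.2)%:R - sg v + mu v = (v \in VH H)%:R * ratr (w v).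
  have := lj v (leqW (ltn_ord v)); rewrite /f ifN ?ext_val ?neq_ltn ?ltn_ord // => <-.
  rewrite (eq_bigr (fun k => lam k * g k v)); last by move=> k _; rewrite /a ifN ?ext_val // neq_ltn ltn_ord.
  rewrite dec /= !mulr0 addr0.
  rewrite (eq_bigr (fun u => - (sg u * (v == u)%:R) + mu u * (v == u)%:R)); last first.
    by move=> u _; rewrite mulrN.
  rewrite big_split /= sumrN.
  rewrite addr0.
  have e1 : \sum_(i < n) sg i * (v == i)%:R = sg v.
    by rewrite (eq_bigr (fun u => (u == v)%:R * sg u)) ?sum_delta' // => u _; rewrite mulrC eq_sym.
  have e2 : \sum_(i < n) mu i * (v == i)%:R = mu v.
    by rewrite (eq_bigr (fun u => (u == v)%:R * mu u)) ?sum_delta' // => u _; rewrite mulrC eq_sym.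
  rewrite e1 e2 addrA; congr (_ - _ + _); apply: eq_bigr => -[i j] _ /=.
  by rewrite /pi mulrA.
have cn : \sum_ij pi ij + lam (inr true) - lam (inr false) = L.
  have := lj n (ltnSn n); rewrite /f eqxx => <-.
  rewrite (eq_bigr (fun k => lam k * al k)); last by move=> k _; rewrite /a eqxx.
  rewrite dec /=.
  have z0 : \sum_(v < n) (lam (inl (inr (v, true))) * 0 + lam (inl (inr (v, false))) * 0) = 0.
    by rewrite big1 // => v _; rewrite !mulr0 addr0.
  rewrite z0 addr0 mulr1 mulrN1 addrA; congr (_ + _ + _); apply: eq_bigr => -[i j] _.
  by rewrite /pi.
have cc : L <= \sum_ij pi ij * kk ij.1 ij.2 - \sum_v sg v * (b v)%:R - lam (inr false).
  move: lc; rewrite dec /= mulr0 add0r mulrN1.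
  rewrite (eq_bigr (fun v => - (sg v * (b v)%:R))); last by move=> v _; rewrite mulr0 addr0 mulrN.
  rewrite sumrN (eq_bigr (fun ij => pi ij * kk ij.1 ij.2)) //.
  by move=> -[i j] _; rewrite /pi /= mulrA.
split.
- by move=> ij; apply: mulr_ge0; rewrite ?ler0n.
- by move=> v; apply: l0.
- exact: l0.
- move=> [i j] /=; rewrite /pi /=; case: leqP => //; by rewrite mulr0 eqxx.
split.
- move=> v; rewrite -cv lerDl; exact: l0.
- by have := l0 (inr true); rewrite -cn; lra.
- lra.
Qed.
End LP.


Lemma sum_eqS (n : nat) (R : realType) (A : {set 'I_n}) (G : {set 'I_n} -> R) :
  \sum_(S : {set 'I_n} | S != set0) (A == S)%:R * G S = (A != set0)%:R * G A.
Proof.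
case: (boolP (A != set0)) => A0.
  rewrite (bigD1 A) //= eqxx mul1r big1 ?addr0 // => S /andP [_ /negbTE]; rewrite eq_sym => ->.
  by rewrite mul0r.
rewrite mul0r big1 // => S S0; case: eqP => [e|_]; last by rewrite mul0r.
by move: A0; rewrite e S0.
Qed.

Lemma inX_sub (R : realType) n N C d (p : 'I_N -> R) cvrp k (x : 'I_n.+1 -> 'I_n.+1 -> R) :
  inX C d p cvrp k x -> inXsub x.
Proof. by rewrite /inX; case: cvrp => // -[]. Qed.

Lemma xnn_of (R : realType) n (x : 'I_n.+1 -> 'I_n.+1 -> R) :
  inXsub x -> forall a b0 : 'I_n.+1, (a < b0)%N -> 0 <= x a b0.
Proof. by case=> h _ a b0 ab; case/andP: (h a b0 ab). Qed.

Theorem theorem5 (R : realType) (n N : nat) (C : rat)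
  (d : 'I_N -> 'I_n -> rat) (p : 'I_N -> R) (w : 'I_n -> rat) (b : 'I_n -> nat)
  (k : nat) (cvrp : bool) (H : seq {set 'I_n}) :
  0 < C ->
  (forall xi v, 0 <= d xi v <= C) ->
  (forall xi, 0 <= p xi) -> \sum_xi p xi = 1 ->
  (forall v, 0 <= w v) ->
  b_ok R C d b ->
  partial_route H ->
  (exists (alpha : 'I_N -> {set 'I_n} -> R) (beta : 'I_N -> 'I_n -> R),
     inA w alpha beta /\
     forall xbar : 'I_n.+1 -> 'I_n.+1 -> R, inX C d p cvrp k xbar ->
     forall theta : 'I_n -> R, (forall v, 0 <= theta v) ->
       proj_ineq C d p w b alpha beta xbar theta ->
       \sum_(v in VH H) theta v >= Lstar C d p w b H * WOF xbar H)
  /\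
  (forall (x : 'I_n.+1 -> 'I_n.+1 -> R) (theta : 'I_n -> R),
     inP C d p w b cvrp k x theta ->
     \sum_(v in VH H) theta v >= Lstar C d p w b H * WOF x H).
Proof.
move=> _ _ p0 _ w0 _ pr.
have l0 : (0 < size H)%N by case: pr.
have Lxi0 xi : 0 <= Lstar_xi R C d w b H xi by apply: Lstar_ge0.
have Ls0 : 0 <= Lstar C d p w b H.
  by apply: sumr_ge0 => xi _; apply: mulr_ge0.
have triv x (theta : 'I_n -> R) : (forall v, 0 <= theta v) -> WOF x H <= 0 ->
    Lstar C d p w b H * WOF x H <= \sum_(v in VH H) theta v.
  move=> th0 W0; apply: le_trans (_ : 0 <= _); last by apply: sumr_ge0.
  by rewrite mulr_ge0_le0.
split; last first.
  move=> x theta [hX [y [hy [hS [hth0 hth]]]]].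
  have Xs := inX_sub hX; have xnn := xnn_of Xs.
  have [W0|Wp] := lerP (WOF x H) 0; first exact: triv.
  have D0 := Dv_ge0 xnn pr Xs l0.
  have eW := WOF_D x H.
  have hxi xi : WOF x H * Lstar_xi R C d w b H xi <= \sum_(v in VH H) ratr (w v) * y xi v.
    rewrite eW; apply: prim => //.
      by apply/andP; split => //; rewrite -subr_ge0 -eW ltW.
    move=> i j ij jl; have ijl : (i <= j < size H)%N by rewrite ij jl.
    have := hS xi _ (VHsub_n0 pr ijl); have := key xnn pr Xs ijl; rewrite /sl; lra.
  apply: le_trans (_ : \sum_(v in VH H) \sum_xi p xi * ratr (w v) * y xi v <= _); last first.
    by apply: ler_sum => v _; apply: hth.
  rewrite exchange_big /= /Lstar mulr_suml; apply: ler_sum => xi _.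
  have -> : p xi * Lstar_xi R C d w b H xi * WOF x H = p xi * (WOF x H * Lstar_xi R C d w b H xi) by ring.
  rewrite (eq_bigr (fun v => p xi * (ratr (w v) * y xi v))) => [|v _]; last exact: esym (mulrA _ _ _).
  rewrite -mulr_sumr; apply: ler_wpM2l => //; exact: hxi.
have [fpi h1] := boolp.choice (fun xi => dual R C d b H xi w0).
have [fsg h2] := boolp.choice h1.
have [frho h3] := boolp.choice h2.
pose A (ij : 'I_(size H) * 'I_(size H)) := VHsub H ij.1 ij.2.
pose alpha xi (S : {set 'I_n}) := p xi * \sum_ij fpi xi ij * (A ij == S)%:R.
pose beta xi v := - (p xi * fsg xi v).
have sumid xi (G : {set 'I_n} -> R) :
    \sum_(S | S != set0) alpha xi S * G S = p xi * \sum_ij fpi xi ij * G (A ij).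
  rewrite (eq_bigr (fun S => p xi * \sum_ij fpi xi ij * ((A ij == S)%:R * G S))); last first.
    by move=> S _; rewrite -mulrA mulr_suml; congr (_ * _); apply: eq_bigr => ij _; rewrite mulrA.
  rewrite -mulr_sumr exchange_big /=; congr (_ * _); apply: eq_bigr => ij _.
  rewrite -mulr_sumr sum_eqS.
  case: (h3 xi) => _ _ _ hnz _.
  have [->|pn] := eqVneq (fpi xi ij) 0; first by rewrite !mul0r.
  have ijl : (ij.1 <= ij.2 < size H)%N by rewrite hnz // ltn_ord.
  by rewrite (VHsub_n0 pr ijl) mul1r.
have Qid xi v : beta xi v + \sum_(S | (S != set0) && (v \in S)) alpha xi S =
    p xi * (\sum_ij fpi xi ij * (v \in A ij)%:R - fsg xi v).
  rewrite big_mkcondr /=.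
  rewrite (eq_bigr (fun S => alpha xi S * (v \in S)%:R)); last first.
    by move=> S _; case: (v \in S); rewrite ?mulr1 ?mulr0.
  by rewrite sumid /beta; ring.
exists alpha, beta; split.
  split; [|split].
  - move=> xi S _; apply: mulr_ge0 => //; apply: sumr_ge0 => ij _; apply: mulr_ge0; last by rewrite ler0n.
    by case: (h3 xi).
  - by move=> xi v; rewrite /beta oppr_le0; apply: mulr_ge0 => //; case: (h3 xi).
  - move=> xi v wv; rewrite Qid; apply: mulr_ge0_le0 => //.
    case: (h3 xi) => _ _ _ _ [hc _ _]; apply: le_trans (hc v) _.
    by rewrite wv rmorph0 mulr0.
move=> x hX theta th0 hp.
have Xs := inX_sub hX; have xnn := xnn_of Xs.
have [W0|Wp] := lerP (WOF x H) 0; first exact: triv.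
have D0 := Dv_ge0 xnn pr Xs l0.
have eW := WOF_D x H.
set D := Dv x H in D0 eW.
have hphi : forall v : 'I_n, 0 < w v -> phi p w alpha beta v <= (v \in VH H)%:R.
  move=> v.
  move=> wv; rewrite /phi; apply: bigmax_le => [|xi _]; first by rewrite ler0n.
  rewrite Qid; have [->|pn] := eqVneq (p xi) 0; first by rewrite !mul0r ler0n.
  have pp : 0 < p xi by rewrite lt_neqAle eq_sym pn p0.
  have wp : 0 < (ratr (w v) : R) by rewrite ltr0q.
  rewrite ler_pdivrMr; last exact: mulr_gt0.
  case: (h3 xi) => _ _ _ _ [hc _ _].
  rewrite mulrCA; apply: ler_wpM2l; first exact: ltW.
  exact: hc.
have hphi0 : forall v : 'I_n, 0 <= phi p w alpha beta v by move=> v; rewrite /phi bigmax_idl le_max lexx.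
have hL : \sum_(v | 0 < w v) phi p w alpha beta v * theta v <= \sum_(v in VH H) theta v.
  apply: le_trans (_ : \sum_(v | 0 < w v) (v \in VH H)%:R * theta v <= _).
    by apply: ler_sum => v wv; apply: ler_wpM2r => //; apply: hphi.
  rewrite -sum_ind [X in _ <= X](bigID (fun v => 0 < w v)) /= lerDl.
  by apply: sumr_ge0 => v _; apply: mulr_ge0; rewrite ?ler0n.
pose X xi := \sum_ij fpi xi ij * (xE x (A ij) + ((kxi C d xi (A ij))%:~R - #|A ij|%:R))
           - \sum_v fsg xi v * (b v)%:R.
have hR : \sum_xi \sum_(S | S != set0) alpha xi S * xE x S + nu C d b alpha beta =
          \sum_xi p xi * X xi.
  rewrite /nu -!big_split /=; apply: eq_bigr => xi _.
  have eX : X xi = \sum_ij fpi xi ij * xE x (A ij) +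
      \sum_ij fpi xi ij * ((kxi C d xi (A ij))%:~R - #|A ij|%:R) - \sum_v fsg xi v * (b v)%:R.
    by rewrite /X -big_split /=; congr (_ - _); apply: eq_bigr => ij _; rewrite mulrDr.
  rewrite eX !sumid /beta.
  rewrite (eq_bigr (fun v => - (p xi * (fsg xi v * (b v)%:R)))); last by move=> v _; rewrite mulNr mulrA.
  rewrite sumrN -mulr_sumr; ring.
have hXi xi : (1 - D) * Lstar_xi R C d w b H xi <= X xi.
  case: (h3 xi) => hpi hsg hrho hnz [hc hd he].
  set L := Lstar_xi R C d w b H xi in hd he *.
  have g1 : \sum_ij fpi xi ij * ((kxi C d xi (A ij))%:~R - 1 - D) <=
            \sum_ij fpi xi ij * (xE x (A ij) + ((kxi C d xi (A ij))%:~R - #|A ij|%:R)).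
    apply: ler_sum => ij _.
    have [->|pn] := eqVneq (fpi xi ij) 0; first by rewrite !mul0r.
    have ijl : (ij.1 <= ij.2 < size H)%N by rewrite hnz // ltn_ord.
    apply: ler_wpM2l; first exact: hpi.
    have := key xnn pr Xs ijl; rewrite /sl -/(A ij) -/D; lra.
  have e1 : \sum_ij fpi xi ij * ((kxi C d xi (A ij))%:~R - 1 - D) =
      \sum_ij fpi xi ij * ((kxi C d xi (A ij))%:~R - 1) - D * \sum_ij fpi xi ij.
    rewrite mulr_sumr -sumrB; apply: eq_bigr => ij _; ring.
  have g2 : D * \sum_ij fpi xi ij <= D * (L + frho xi) by apply: ler_wpM2l.
  have g3 : 0 <= (1 - D) * frho xi by apply: mulr_ge0 => //; rewrite -eW ltW.
  rewrite /X; move: g1 g2 g3 hd he; rewrite e1.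
  have -> : (1 - D) * L = L - D * L by ring.
  have -> : D * (L + frho xi) = D * L + D * frho xi by ring.
  have -> : (1 - D) * frho xi = frho xi - D * frho xi by ring.
  move: (D * L) (D * frho xi) (D * \sum_ij fpi xi ij) => Z1 Z2 Z3; lra.
have hfin : Lstar C d p w b H * WOF x H <= \sum_xi p xi * X xi.
  rewrite eW /Lstar mulr_suml; apply: ler_sum => xi _.
  rewrite -mulrA; apply: ler_wpM2l => //; rewrite mulrC; exact: hXi.
apply: le_trans hfin _; rewrite -hR; apply: le_trans hp hL.
Qed.
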